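(* Let $k$ be a positive integer whose binary expansion has $m>2$ nonzero bits. Then the numerators of the fractions $s_{k,k}$ and $s_{2k}$, written in lowest terms, are both divisible by $2^{m-2}$.
   Context: For a partition $I=(i_1,\dots,i_r)$ of $k$, write $p_I=p_{i_1}\cdots p_{i_r}$ and let $s_I\in\mathbb{Q}$ denote the coefficient of $p_I$ in the $k$-th Hirzebruch $\mathcal{L}$-polynomial, i.e. $\mathcal{L}_k(p_1,\dots,p_k)=\sum_{|I|=k}s_Ip_I$, where $1+\mathcal{L}_1+\mathcal{L}_2+\cdots$ is the multiplicative sequence with characteristic power series $\sqrt{t}/\tanh\sqrt{t}$. In particular $s_k=\frac{2^{2k}(2^{2k-1}-1)|B_{2k}|}{(2k)!}$ (with $B_j$ the Bernoulli numbers) and $s_{k,k}=\tfrac12(s_k^2-s_{2k})$. *)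

(* Defs.v *)
From HB Require Import structures.
From mathcomp Require Import all_boot all_order all_algebra.
Set Implicit Arguments. Unset Strict Implicit. Unset Printing Implicit Defensive.
Import Order.TTheory GRing.Theory Num.Theory.
Local Open Scope ring_scope.

(* Bernoulli numbers (convention B_1 = -1/2; only even indices are used),
   via the recurrence  sum_{j=0}^{n} C(n+1,j) B_j = 0  (n >= 1), B_0 = 1.
   bern_seq n = [:: B_0; ...; B_n]. *)
Fixpoint bern_seq (n : nat) : seq rat :=
  match n with
  | 0 => [:: 1]
  | n'.+1 =>
      let s := bern_seq n' in
      rcons s (- (\sum_(j < n'.+1) ('C(n'.+2, j))%:R * nth 0 s j) / (n'.+2)%:R)
  end.

Definition bernoulli (n : nat) : rat := nth 0 (bern_seq n) n.

(* s_k : coefficient of p_k in the Hirzebruch L-polynomial L_k *)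
Definition s_single (k : nat) : rat :=
  (2 ^ (2 * k))%:R * ((2 ^ (2 * k).-1)%:R - 1) * `|bernoulli (2 * k)|
    / ((2 * k)`!)%:R.

(* s_{k,k} : coefficient of p_k^2 in L_{2k} *)
Definition s_double (k : nat) : rat :=
  (s_single k ^+ 2 - s_single (2 * k)) / 2.

(* number of nonzero bits in the binary expansion of k
   (bit i of k is odd (k %/ 2^i); all bits of k have index <= k) *)
Definition popcount (k : nat) : nat :=
  (\sum_(i < k.+1) odd (k %/ 2 ^ i))%N.

(* Main.v *)
Require Import Defs.
From HB Require Import structures.
From mathcomp Require Import all_boot all_order all_algebra.
From mathcomp Require Import zify ring lra.
Import Order.TTheory GRing.Theory Num.Theory.

Section Helpers.
Local Open Scope ring_scope.
Local Set Implicit Arguments. Local Unset Strict Implicit.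
Definition d2 (e : nat) (r : rat) :=
  exists (p : int) (q : nat), odd q /\ r = (2 ^ e)%N%:R * p%:~R / q%:R.

Lemma odd_neq0 (q : nat) : odd q -> q%:R != 0 :> rat.
Proof. by move=> oq; rewrite pnatr_eq0; apply/eqP => q0; rewrite q0 in oq. Qed.

Lemma d2D e r s : d2 e r -> d2 e s -> d2 e (r + s).
Proof.
move=> [p [q [oq ->]]] [p' [q' [oq' ->]]].
exists (p * q'%:Z + p' * q%:Z), (q * q')%N; split; first by rewrite oddM oq oq'.
have h1 := odd_neq0 oq; have h2 := odd_neq0 oq'.
rewrite natrM rmorphD !rmorphM /=. field. by rewrite h1 h2.
Qed.

Lemma d2N e r : d2 e r -> d2 e (- r).
Proof.
move=> [p [q [oq ->]]]; exists (- p), q; split => //.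
by rewrite rmorphN /= mulrN mulNr.
Qed.

Lemma d2B e r s : d2 e r -> d2 e s -> d2 e (r - s).
Proof. by move=> h1 h2; apply: d2D => //; apply: d2N. Qed.

Lemma d2M e f r s : d2 e r -> d2 f s -> d2 (e + f) (r * s).
Proof.
move=> [p [q [oq ->]]] [p' [q' [oq' ->]]].
exists (p * p'), (q * q')%N; split; first by rewrite oddM oq oq'.
have h1 := odd_neq0 oq; have h2 := odd_neq0 oq'.
rewrite natrM expnD natrM rmorphM /=. field. by rewrite h1 h2.
Qed.

Lemma d2W e f r : d2 e r -> (f <= e)%N -> d2 f r.
Proof.
move=> [p [q [oq ->]]] fe; exists ((2 ^ (e - f))%N%:Z * p), q; split => //.
rewrite rmorphM /= mulrA.
have -> : ((2 ^ (e - f))%N%:Z)%:~R = (2 ^ (e - f))%N%:R :> rat by [].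
by rewrite -natrM -expnD subnKC.
Qed.

Lemma d2_half e r : d2 e.+1 r -> d2 e (r / 2).
Proof.
move=> [p [q [oq ->]]]; exists p, q; split => //.
have h1 := odd_neq0 oq; rewrite expnS natrM. field. by rewrite h1.
Qed.

Lemma d2_int e (z : int) : d2 e ((2 ^ e)%N%:R * z%:~R).
Proof. by exists z, 1%N; split => //; rewrite divr1. Qed.

Lemma d2_nat (n : nat) : d2 0 n%:R.
Proof. by exists n%:Z, 1%N; split => //; rewrite expn0 mul1r divr1. Qed.

Lemma d2_pow e : d2 e (2 ^ e)%N%:R.
Proof. by exists 1, 1%N; split => //; rewrite divr1 mulr1. Qed.

Lemma d2_oddinv (u : nat) : odd u -> d2 0 (1 / u%:R).
Proof. by move=> ou; exists 1, u; split => //; rewrite expn0 mul1r. Qed.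

Lemma d2_sum e (I : Type) (s : seq I) (F : I -> rat) :
  (forall i, d2 e (F i)) -> d2 e (\sum_(i <- s) F i).
Proof.
move=> h; elim: s => [|x s IH]; first by rewrite big_nil; exists 0, 1%N; rewrite mulr0 mul0r.
by rewrite big_cons; apply: d2D.
Qed.

Lemma d2_abs e r : d2 e r -> d2 e `|r|.
Proof.
move=> h; case: (ler0P r) => _; last by [].
by apply: d2N.
Qed.

Lemma d2_numq e r : d2 e r -> ((2 ^ e)%N%:Z %| numq r)%Z.
Proof.
move=> [p [q [oq rE]]].
have den0 : (denq r)%:~R != 0 :> rat by rewrite intr_eq0 denq_neq0.
have q0 := odd_neq0 oq.
have eq1 : (numq r * q%:Z = (2 ^ e)%N%:Z * p * denq r)%R.
  apply/eqP; rewrite -(eqr_int rat) !rmorphM /= numqE rE.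
  apply/eqP. rewrite -[(2 ^ e)%N%:Z%:~R]/((2 ^ e)%N%:R : rat) //. field. by rewrite q0.
have eq2 := congr1 absz eq1; rewrite !abszM /= in eq2.
have cop := coprime_num_den r.
have dq : (`|denq r| %| q)%N.
  rewrite coprime_sym in cop; rewrite -(Gauss_dvdr _ cop).
  by rewrite eq2 dvdn_mull.
have od : odd `|denq r| by apply: (dvdn_odd dq).
rewrite dvdzE /=.
have c2 : coprime (2 ^ e) q by rewrite coprimeXl // coprime2n.
rewrite -(Gauss_dvdl _ c2) eq2 -mulnA dvdn_mulr //.
Qed.

Lemma sumpow a n : (2 ^ a %| \sum_(i < 2 ^ a.+1) i ^ n)%N.
Proof.
elim: a n => [|a IH] n; first by rewrite expn0 dvd1n.
have -> : (2 ^ a.+2 = 2 ^ a.+1 + 2 ^ a.+1)%N by rewrite expnS; lia.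
rewrite big_split_ord /=.
set S := (\sum_(i < 2 ^ a.+1) i ^ n)%N.
have e2 : (\sum_(i < 2 ^ a.+1) (2 ^ a.+1 + i) ^ n = S %[mod 2 ^ a.+1])%N.
  rewrite -modn_summ /S -[in RHS]modn_summ; congr (_ %% _)%N.
  by apply: eq_bigr => i _; rewrite -modnXm modnDl modnXm.
have hh : ((S + \sum_(i < 2 ^ a.+1) (2 ^ a.+1 + i) ^ n) %% 2 ^ a.+1 = (S + S) %% 2 ^ a.+1)%N.
  by rewrite -modnDmr e2 modnDmr.
rewrite /dvdn hh -/(dvdn _ _) addnn -mul2n expnS.
by rewrite dvdn_pmul2l // /S IH.
Qed.

Lemma d2_powdiv m : (0 < m)%N -> d2 0 ((2 ^ m)%N%:R / m%:R).
Proof.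
elim/ltn_ind: m => m IH m0.
case/boolP: (odd m) => om.
  by exists (2 ^ m)%N%:Z, m; split => //; rewrite expn0 mul1r.
have [m' Em] : exists m', m = (2 * m')%N by exists m./2; rewrite -[in LHS](odd_double_half m) (negbTE om) add0n -muln2 mulnC.
subst m.
have m'0 : (0 < m')%N by lia.
have := IH m' ltac:(lia) m'0.
move=> h; have := d2M h (d2_pow m'.-1); rewrite add0n => h2.
have := d2W h2 (leq0n _).
have -> : (2 ^ (2 * m'))%N%:R / (2 * m')%N%:R = (2 ^ m')%N%:R / m'%:R * (2 ^ m'.-1)%N%:R :> rat.
  have mm : m'%:R != 0 :> rat by rewrite pnatr_eq0; lia.
  have -> : (2 ^ (2 * m') = 2 * 2 ^ m'.-1 * 2 ^ m')%N.
    by rewrite -expnS -expnD prednK //; congr (_ ^ _)%N; lia.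
  rewrite !natrM. field. by rewrite mm.
by [].
Qed.

Definition pcL (n L : nat) : nat := (\sum_(i < L) odd (n %/ 2 ^ i))%N.

Lemma pcL_add n L d : (n < 2 ^ L)%N -> pcL n (L + d) = pcL n L.
Proof.
move=> hn; rewrite /pcL big_split_ord /= [X in (_ + X)%N]big1 ?addn0 // => i _.
rewrite divn_small //; apply: (leq_trans hn); rewrite leq_exp2l //; lia.
Qed.

Lemma pcL_eq n L1 L2 : (n < 2 ^ L1)%N -> (n < 2 ^ L2)%N -> pcL n L1 = pcL n L2.
Proof.
wlog le : L1 L2 / (L1 <= L2)%N.
  move=> W h1 h2; case: (leqP L1 L2) => h; first exact: W.
  by symmetry; apply: W => //; apply: ltnW.
move=> h1 _; rewrite -(subnKC le) pcL_add //.
Qed.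

Lemma pcL_S n L : pcL n L.+1 = (odd n + pcL (n %/ 2) L)%N.
Proof.
rewrite /pcL big_ord_recl /= expn0 divn1; congr (_ + _)%N.
by apply: eq_bigr => i _; rewrite /bump /= add1n expnS divnMA.
Qed.

Lemma lt2exp x L : (x <= L)%N -> (x < 2 ^ L)%N.
Proof.
move=> h; apply: (leq_trans (ltn_expl x (isT : 1 < 2)%N)).
by rewrite leq_exp2l.
Qed.

Lemma popcountE n : popcount n = (odd n + popcount (n %/ 2))%N.
Proof.
rewrite /popcount -/(pcL n n.+1) -/(pcL (n %/ 2) (n %/ 2).+1) pcL_S.
congr (_ + _)%N; apply: pcL_eq; apply: lt2exp => //.
exact: leq_div.
Qed.

Lemma fact_double q : exists v, odd v /\ (2 * q)`! = (2 ^ q * q`! * v)%N.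
Proof.
elim: q => [|q [v [ov IH]]]; first by exists 1%N.
exists (v * (2 * q).+1)%N; split; first by rewrite oddM ov /= oddM.
have -> : (2 * q.+1 = (2 * q).+2)%N by lia.
rewrite !factS IH expnS; ring.
Qed.

Lemma legendre n : exists u, odd u /\ (n`! * 2 ^ popcount n = 2 ^ n * u)%N.
Proof.
elim/ltn_ind: n => n IH.
case: n IH => [|n] IH; first by exists 1%N; rewrite /popcount big_ord1.
have [q Eq] : exists q, n.+1 = (2 * q + odd n.+1)%N.
  exists n.+1./2; rewrite addnC mul2n; exact: (esym (odd_double_half n.+1)).
have ob := leq_b1 (odd n.+1).
have qlt : (q < n.+1)%N by lia.
have [u [ou Hu]] := IH q qlt.
have [v [ov Hv]] := fact_double q.
have h2 : (n.+1 %/ 2 = q)%N by lia.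
rewrite popcountE h2.
case/boolP: (odd n.+1) Eq => o Eq; rewrite Eq /=.
- exists (u * v * (2 * q).+1)%N; split; first by rewrite !oddM ou ov /= oddM.
  rewrite addn1 factS Hv expnD expnS.
  have -> : ((2 * q).+1 * (2 ^ q * q`! * v) * (2 ^ 1 * 2 ^ popcount q)
     = (2 * q).+1 * 2 * 2 ^ q * v * (q`! * 2 ^ popcount q))%N by ring.
  have e : (2 ^ (2 * q) = 2 ^ q * 2 ^ q)%N by rewrite -expnD addnn -mul2n.
  rewrite Hu expnS e; ring.
- exists (u * v)%N; split; first by rewrite oddM ou ov.
  rewrite addn0 add0n Hv.
  have -> : (2 ^ q * q`! * v * 2 ^ popcount q = 2 ^ q * v * (q`! * 2 ^ popcount q))%N by ring.
  have e : (2 ^ (2 * q) = 2 ^ q * 2 ^ q)%N by rewrite -expnD addnn -mul2n.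
  rewrite Hu e; ring.
Qed.

Lemma size_bern n : size (bern_seq n) = n.+1.
Proof. by elim: n => [|n IH] //=; rewrite size_rcons IH. Qed.

Lemma nth_bern n j : (j <= n)%N -> nth 0 (bern_seq n) j = bernoulli j.
Proof.
elim: n => [|n IH] hj; first by move: hj; rewrite leqn0 => /eqP ->.
case: (ltngtP j n.+1) hj => // [hj _|-> _]; last by [].
by rewrite /= nth_rcons size_bern hj IH.
Qed.

Lemma bern_rec r : (2 <= r)%N -> \sum_(j < r) ('C(r, j))%:R * bernoulli j = 0.
Proof.
case: r => [|[|n]] // _.
rewrite big_ord_recr /= binSn.
have -> : bernoulli n.+1 = - (\sum_(j < n.+1) ('C(n.+2, j))%:R * nth 0 (bern_seq n) j) / (n.+2)%:R.
  by rewrite /bernoulli /= nth_rcons size_bern ltnn eqxx.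
have -> : \sum_(j < n.+1) ('C(n.+2, j))%:R * nth 0 (bern_seq n) j
        = \sum_(j < n.+1) ('C(n.+2, j))%:R * bernoulli j.
  by apply: eq_bigr => j _; rewrite nth_bern // -ltnS.
have h : (n.+2)%:R != 0 :> rat by rewrite pnatr_eq0.
field; apply/lt0r_neq0; have := ler0n rat n; lra.
Qed.

Lemma bern_rec1 r : (1 <= r)%N -> \sum_(j < r) ('C(r, j))%:R * bernoulli j = (r == 1)%N%:R.
Proof.
case: r => [|[|n]] // _; last by rewrite bern_rec.
by rewrite big_ord1 /= /bernoulli /= mul1r.
Qed.

Lemma bin_swap m j l : (j + l <= m)%N ->
  ('C(m, j) * 'C(m - j, l) = 'C(m, l) * 'C(m - l, j))%N.
Proof.
move=> h.
have h1 := bin_fact (_ : l <= m - j)%N; have h2 := bin_fact (_ : j <= m)%N.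
have h3 := bin_fact (_ : j <= m - l)%N; have h4 := bin_fact (_ : l <= m)%N.
have K0 : (0 < j`! * l`! * (m - j - l)`!)%N by rewrite !muln_gt0 !fact_gt0.
apply/eqP; rewrite -(eqn_pmul2r K0); apply/eqP.
have e : (m - l - j = m - j - l)%N by lia.
transitivity m`!.
  rewrite -(h2 ltac:(lia)) -(h1 ltac:(lia)); ring.
rewrite -(h4 ltac:(lia)) -(h3 ltac:(lia)) e; ring.
Qed.

Lemma diffpow k (x : rat) : (x + 1) ^+ k - x ^+ k = \sum_(l < k) ('C(k, l))%:R * x ^+ l.
Proof.
rewrite exprD1n big_ord_recr /= binn mulr1n addrK.
by apply: eq_bigr => l _; rewrite mulr_natl.
Qed.

Definition P n (x : rat) := \sum_(j < n.+1) ('C(n.+1, j))%:R * bernoulli j * x ^+ (n.+1 - j).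

Lemma P_step n x : P n (x + 1) - P n x = (n.+1)%:R * x ^+ n.
Proof.
set m := n.+1.
rewrite /P -sumrB.
have E1 : forall j : 'I_m, ('C(m, j))%:R * bernoulli j * (x + 1) ^+ (m - j)
   - ('C(m, j))%:R * bernoulli j * x ^+ (m - j)
   = \sum_(l < m) (if (l < m - j)%N then ('C(m, j) * 'C(m - j, l))%N%:R * bernoulli j * x ^+ l else 0).
  move=> j; rewrite -mulrBr diffpow (big_ord_widen m (fun l : nat => ('C(m - j, l))%:R * x ^+ l) (leq_subr j m)) big_mkcond mulr_sumr.
  apply: eq_bigr => l _; case: ifP => _; last by rewrite mulr0.
  by rewrite natrM; ring.
rewrite (eq_bigr _ (fun j _ => E1 j)) exchange_big /=.
have E2 : forall l : 'I_m,
   \sum_(j < m) (if (l < m - j)%N then ('C(m, j) * 'C(m - j, l))%N%:R * bernoulli j * x ^+ l else 0)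
   = ('C(m, l))%:R * x ^+ l * ((m - l) == 1)%N%:R.
  move=> l; rewrite -bern_rec1; last by rewrite subn_gt0.
  rewrite (big_ord_widen m (fun j : nat => ('C(m - l, j))%:R * bernoulli j) (leq_subr l m)) mulr_sumr [RHS]big_mkcond.
  apply: eq_bigr => j _.
  have hj := ltn_ord j; have hl := ltn_ord l.
  have -> : (l < m - j)%N = (j < m - l)%N by apply/idP/idP; lia.
  case: ifP => h; last by [].
  rewrite bin_swap; last by lia.
  rewrite natrM; move: ('C(m, l))%:R ('C(m - l, j))%:R (bernoulli j) (x ^+ l) => a b c d.
  by rewrite -!mulrA [d * _]mulrC -!mulrA.
rewrite (eq_bigr _ (fun l _ => E2 l)) big_ord_recr /= big1.
  by rewrite add0r /m subSnn eqxx binSn mulr1 mulr_natl.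
move=> l _; have hl := ltn_ord l.
have -> : (m - l == 1)%N = false by apply/eqP; rewrite /m; lia.
by rewrite mulr0.
Qed.

Lemma P_val n (N : nat) : P n N%:R = (n.+1)%:R * (\sum_(i < N) i ^ n)%N%:R.
Proof.
elim: N => [|N IH].
  rewrite big_ord0 mulr0 /P big1 // => j _.
  have hj := ltn_ord j.
  rewrite (_ : (n.+1 - j = (n - j).+1)%N); last by lia.
  by rewrite exprS mulr0n mul0r mulr0.
rewrite big_ord_recr /= natrD mulrDr -IH natrX -P_step.
by rewrite -[N.+1%:R]natr1 addrCA subrr addr0.
Qed.

Lemma d2_term n j : (j < n)%N ->
  d2 0 (((2 ^ n.+1)%N%:R : rat) ^+ (n - j) / (n.+1)%:R).
Proof.
move=> hj.
have [d ->] : exists d, (n - j = d.+1)%N by exists (n - j).-1; lia.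
have -> : ((2 ^ n.+1)%N%:R : rat) ^+ d.+1 / (n.+1)%:R
   = (2 ^ n.+1)%N%:R / (n.+1)%:R * (2 ^ (n.+1 * d))%N%:R.
  rewrite exprSr -natrX -expnM mulnC.
  have h : (n.+1)%:R != 0 :> rat by rewrite pnatr_eq0.
  field; apply/lt0r_neq0; have := ler0n rat n; lra.
apply: (@d2W (0 + n.+1 * d)%N); last exact: leq0n.
apply: d2M; last exact: d2_pow.
exact: d2_powdiv.
Qed.

Lemma bern_d2 n : d2 0 (2 * bernoulli n).
Proof.
elim/ltn_ind: n => n IH.
set N : rat := (2 ^ n.+1)%N%:R.
have [t Ht] := dvdnP (sumpow n n).
have HP := P_val n (2 ^ n.+1).
rewrite /P big_ord_recr /= binSn subSnn expr1 Ht -/N in HP.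
set T := \sum_(j < n) ('C(n.+1, j))%:R * (2 * bernoulli j) * (N ^+ (n - j) / (n.+1)%:R).
have key : \sum_(j < n) ('C(n.+1, j))%:R * bernoulli j * N ^+ (n.+1 - j)
    = (n.+1)%:R * N / 2 * T.
  rewrite /T mulr_sumr; apply: eq_bigr => j _.
  have hj := ltn_ord j.
  rewrite subSn; last by apply: ltnW.
  have h : (n.+1)%:R != 0 :> rat by rewrite pnatr_eq0.
  rewrite exprS; field; apply/lt0r_neq0; have := ler0n rat n; lra.
rewrite key in HP.
have E : 2 * bernoulli n = t%:R - T.
  have h : (n.+1)%:R != 0 :> rat by rewrite pnatr_eq0.
  have hN : N = 2 * (2 ^ n)%N%:R by rewrite /N expnS natrM.
  have h2 : (2 ^ n)%N%:R != 0 :> rat by rewrite pnatr_eq0 expn_eq0.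
  rewrite natrM hN in HP.
  apply: (mulfI (_ : (n.+1)%:R * (2 ^ n)%N%:R != 0)); first by rewrite mulf_neq0.
  have -> : (n.+1)%:R * (2 ^ n)%N%:R * (2 * bernoulli n)
     = (n.+1)%:R * (t%:R * (2 ^ n)%N%:R) - (n.+1)%:R * (2 * (2 ^ n)%N%:R) / 2 * T.
    by rewrite -HP; field.
  by field.
rewrite E; apply: d2B; first exact: d2_nat.
apply: d2_sum => j.
have := d2M (d2M (d2_nat 'C(n.+1, j)) (IH j (ltn_ord j))) (d2_term (ltn_ord j)).
by [].
Qed.

Lemma pc_double n : popcount (2 * n) = popcount n.
Proof. by rewrite popcountE oddM /= add0n mulKn. Qed.

Lemma s_single_d2 n : (0 < popcount n)%N -> d2 (popcount n).-1 (s_single n).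
Proof.
move=> p0.
have [u [ou Hu]] := legendre (2 * n).
rewrite pc_double in Hu.
set p := popcount n in p0 Hu *.
have hu := odd_neq0 ou.
have hf : ((2 * n)`!)%:R != 0 :> rat by rewrite pnatr_eq0 -lt0n fact_gt0.
have L : (2 ^ (2 * n))%N%:R = ((2 * n)`!)%:R * (2 ^ p)%N%:R / u%:R :> rat.
  by rewrite -natrM Hu natrM; field.
have E : s_single n = (2 ^ p.-1)%N%:R * ((1 / u%:R) * (((2 ^ (2 * n).-1)%N%:R - 1) * `|2 * bernoulli (2 * n)|)).
  rewrite /s_single L normrM (ger0_norm (_ : 0 <= 2 :> rat)) //.
  rewrite -(prednK p0) expnS natrM prednK //.
  by field; rewrite hf hu.
rewrite E.
apply: (@d2W (p.-1 + 0)%N); last by rewrite addn0.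
apply: d2M; first exact: d2_pow.
have := d2M (d2_oddinv ou) (d2M (d2B (d2_nat _) (d2_nat 1)) (d2_abs (bern_d2 (2 * n)))).
by [].
Qed.

End Helpers.

Theorem proposition2p1 (k : nat) :
  (0 < k)%N -> (2 < popcount k)%N ->
  (((2 ^ (popcount k - 2))%N%:Z %| numq (s_double k))%Z /\
   ((2 ^ (popcount k - 2))%N%:Z %| numq (s_single (2 * k)))%Z).
Proof.
move=> k0 hm.
have p0 : (0 < popcount k)%N by lia.
have h1 := s_single_d2 p0.
have h2 : d2 (popcount k).-1 (s_single (2 * k)).
  by rewrite -pc_double; apply: s_single_d2; rewrite pc_double.
split; apply: d2_numq.
  rewrite /s_double; apply: d2_half.
  have -> : (popcount k - 2).+1 = (popcount k).-1 by lia.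
  apply: d2B => //.
  rewrite expr2; apply: (d2W (d2M h1 h1)); lia.
by apply: (d2W h2); lia.
Qed.
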